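(* Let $\mathcal A$ be a Banach algebra and $(a_\alpha)_{\alpha\in\Lambda}$ a bounded net in $\mathcal A$ which is quasi-central, i.e. $\lim_\alpha(aa_\alpha-a_\alpha a)=0$ for all $a\in\mathcal A$, and let $I(a_\alpha)=\{a\in\mathcal A:\lim_\alpha aa_\alpha=a\}$. If one of the following holds: (i) $\mathcal A$ is weakly amenable and $\{a_\alpha:\alpha\in\Lambda\}\subseteq I(a_\alpha)$; (ii) there exists a closed two-sided ideal $M$ of $\mathcal A$ of codimension one such that $H^1(M,I(a_\alpha)^* )=\{0\}$; then $\mathcal A$ is $I(a_\alpha)$-weakly amenable, i.e. $H^1(\mathcal A,I(a_\alpha)^* )=\{0\}$.
   Context: $I(a_\alpha)$ is a closed two-sided ideal of $\mathcal A$. For a closed two-sided ideal $J$, $J^*$ is a Banach $\mathcal A$-bimodule (and, by restriction, an $M$-bimodule) with $\langle x,a\cdot f\rangle=\langle xa,f\rangle$, $\langle x,f\cdot a\rangle=\langle ax,f\rangle$. For a Banach algebra $\mathcal B$ and Banach $\mathcal B$-bimodule $Z$, a derivation is a continuous linear map $D:\mathcal B\to Z$ with $D(ab)=a\cdot D(b)+D(a)\cdot b$; it is inner if $D(a)=a\cdot z-z\cdot a$ for some $z\in Z$; $H^1(\mathcal B,Z)=\{0\}$ means every derivation is inner. $\mathcal A$ is weakly amenable if $H^1(\mathcal A,\mathcal A^* )=\{0\}$. *)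

(* Defs.v *)
From HB Require Import structures.
From mathcomp Require Import all_boot all_order all_algebra.
From mathcomp Require Import all_classical all_reals all_analysis.
From mathcomp Require Import complex.
Set Implicit Arguments. Unset Strict Implicit. Unset Printing Implicit Defensive.
Import Order.TTheory GRing.Theory Num.Theory.
Import numFieldNormedType.Exports.
Local Open Scope classical_set_scope.
Local Open Scope ring_scope.

Section Defs.
Context {K : numFieldType} {A : normedModType K}.

Definition banach_algebra (mul : A -> A -> A) : Prop :=
  [/\ forall a b c, mul a (mul b c) = mul (mul a b) c,
      forall a b c, mul (a + b) c = mul a c + mul b c,
      forall a b c, mul a (b + c) = mul a b + mul a c,
      forall (k : K) a b, mul (k *: a) b = k *: mul a b
                          /\ mul a (k *: b) = k *: mul a b
    & forall a b, `|mul a b| <= `|a| * `|b| ].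

Definition closed_ideal (mul : A -> A -> A) (J : set A) : Prop :=
  [/\ closed J, J 0,
      forall x y, J x -> J y -> J (x + y),
      forall (k : K) x, J x -> J (k *: x)
    & forall a x, J x -> J (mul a x) /\ J (mul x a) ].

Definition codim_one (J : set A) : Prop :=
  exists2 e : A, ~ J e & forall a : A, exists k : K, exists2 m : A, J m & a = k *: e + m.

Definition directed (L : Type) (le : L -> L -> Prop) : Prop :=
  [/\ inhabited L, forall i, le i i,
      forall i j k, le i j -> le j k -> le i k
    & forall i j, exists k, le i k /\ le j k].

Definition net_lim (L : Type) (le : L -> L -> Prop) (x : L -> A) (l : A) : Prop :=
  forall e : K, 0 < e -> exists i0, forall i, le i0 i -> `|x i - l| < e.

Definition bounded_net (L : Type) (x : L -> A) : Prop :=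
  exists M : K, forall i, `|x i| <= M.

Definition quasi_central (mul : A -> A -> A) (L : Type) (le : L -> L -> Prop)
  (x : L -> A) : Prop :=
  forall a, net_lim le (fun i => mul a (x i) - mul (x i) a) 0.

Definition Iset (mul : A -> A -> A) (L : Type) (le : L -> L -> Prop)
  (x : L -> A) : set A :=
  [set a | net_lim le (fun i => mul a (x i)) a].

(** f : A -> K represents an element of the dual J^* : its restriction to J
    is linear and continuous (bounded).  Two such functions represent the
    same functional iff they agree on J. *)
Definition in_dual (J : set A) (f : A -> K) : Prop :=
  [/\ forall x y, J x -> J y -> f (x + y) = f x + f y,
      forall (k : K) x, J x -> f (k *: x) = k * f x
    & exists M : K, forall x, J x -> `|f x| <= M * `|x| ].

(** D : B -> J^* is a (continuous) derivation, where J^* carries the module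
    actions <x, a.f> = <xa, f>, <x, f.a> = <ax, f>. *)
Definition derivation (mul : A -> A -> A) (B J : set A) (D : A -> A -> K) : Prop :=
  [/\ forall a, B a -> in_dual J (D a),
      forall a b x, B a -> B b -> J x -> D (a + b) x = D a x + D b x,
      forall (k : K) a x, B a -> J x -> D (k *: a) x = k * D a x,
      exists M : K, forall a x, B a -> J x -> `|D a x| <= M * `|a| * `|x|
    & forall a b x, B a -> B b -> J x ->
        D (mul a b) x = D b (mul x a) + D a (mul b x) ].

Definition inner_derivation (mul : A -> A -> A) (B J : set A) (D : A -> A -> K) : Prop :=
  exists2 f : A -> K, in_dual J f &
    forall a x, B a -> J x -> D a x = f (mul x a) - f (mul a x).

Definition H1_trivial (mul : A -> A -> A) (B J : set A) : Prop :=
  forall D, derivation mul B J D -> inner_derivation mul B J D.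

Definition weakly_amenable (mul : A -> A -> A) : Prop :=
  H1_trivial mul setT setT.

End Defs.

(* Main.v *)
Require Import Defs.
From HB Require Import structures.
From mathcomp Require Import all_boot all_order all_algebra.
From mathcomp Require Import all_classical all_reals all_analysis.
From mathcomp Require Import complex.
From mathcomp Require Import ring.
Import Order.TTheory GRing.Theory Num.Theory.
Import numFieldNormedType.Exports.
Local Open Scope classical_set_scope.
Local Open Scope ring_scope.
Set Implicit Arguments. Unset Strict Implicit. Unset Printing Implicit Defensive.

Section Gen.
Context {K : numFieldType}.

Definition netF (L : Type) (le : L -> L -> Prop) : set_system L :=
  filter_from setT (fun i0 => [set i | le i0 i]).

Lemma netF_proper (L : Type) (le : L -> L -> Prop) : directed le -> ProperFilter (netF le).
Proof.
case=> [[i0] refl trans dir].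
apply: filter_from_proper; last by move=> i _; exists i; exact: refl.
apply: filter_from_filter; first by exists i0.
move=> i j _ _; have [k [ik jk]] := dir i j.
exists k => // l /= kl; split; [exact: trans ik kl|exact: trans jk kl].
Qed.

Lemma net_limP (A : normedModType K) (L : Type) (le : L -> L -> Prop) (x : L -> A) l :
  directed le -> (net_lim le x l <-> x @ netF le --> l).
Proof.
move=> dle; have PF := netF_proper dle.
rewrite cvgrPdist_lt; split.
- move=> H e e0; have [i0 Hi] := H e e0.
  exists i0 => // i /= li; rewrite distrC; exact: Hi.
- move=> H e e0; have [i0 _ Hi] := H e e0.
  by exists i0 => i li; rewrite distrC; apply: Hi.
Qed.

Lemma squeeze (T : Type) (F : set_system T) {FF : Filter F}
  (V W : normedModType K) (f : T -> V) (h : T -> W) l m (C : K) :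
  0 <= C -> (forall t, `|h t - m| <= C * `|f t - l|) -> f @ F --> l -> h @ F --> m.
Proof.
move=> C0 Hb /cvgrPdist_lt Hf; apply/cvgrPdist_lt => e e0.
have Ce : 0 < e / (C + 1) by rewrite divr_gt0 // ltr_wpDl.
near=> t.
have H1 : `|l - f t| < e / (C + 1) by near: t; exact: Hf.
rewrite distrC (le_lt_trans (Hb t)) //.
apply: (@le_lt_trans _ _ (C * (e / (C + 1)))).
  by rewrite ler_wpM2l // distrC ltW.
rewrite mulrA ltr_pdivrMr ?ltr_wpDl //.
by rewrite [e * _]mulrC ltr_pM2r // ltrDl.
Unshelve. all: by end_near.
Qed.

Lemma bound_norm (M r s : K) : 0 <= s -> 0 <= r -> s <= M * r -> s <= `|M| * r.
Proof.
move=> s0 r0 H; have [rz|rn0] := eqVneq r 0.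
  by move: H; rewrite rz !mulr0.
have rp : 0 < r by rewrite lt_def rn0 r0.
have M0 : 0 <= M by rewrite -(pmulr_lge0 _ rp) (le_trans s0 H).
by rewrite ger0_norm.
Qed.

End Gen.

Section Alg.
Context {K : numFieldType} {A : normedModType K} (mul : A -> A -> A).
Context (BA : banach_algebra mul).

Lemma mulDl a b c : mul (a + b) c = mul a c + mul b c.
Proof. by move: BA => [] *. Qed.
Lemma mulDr a b c : mul a (b + c) = mul a b + mul a c.
Proof. by move: BA => [] *. Qed.
Lemma mulA a b c : mul a (mul b c) = mul (mul a b) c.
Proof. by move: BA => [] *. Qed.
Lemma mulZl (k : K) a b : mul (k *: a) b = k *: mul a b.
Proof. by have [_ _ _ H _] := BA; case: (H k a b). Qed.
Lemma mulZr (k : K) a b : mul a (k *: b) = k *: mul a b.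
Proof. by have [_ _ _ H _] := BA; case: (H k a b). Qed.
Lemma norm_mul a b : `|mul a b| <= `|a| * `|b|.
Proof. by move: BA => [] *. Qed.
Lemma bmul0l b : mul 0 b = 0.
Proof. by rewrite -(scale0r 0) mulZl !scale0r. Qed.
Lemma bmul0r b : mul b 0 = 0.
Proof. by rewrite -(scale0r 0) mulZr !scale0r. Qed.
Lemma mulNl a b : mul (- a) b = - mul a b.
Proof. by rewrite -scaleN1r mulZl scaleN1r. Qed.
Lemma mulNr a b : mul b (- a) = - mul b a.
Proof. by rewrite -scaleN1r mulZr scaleN1r. Qed.
Lemma mulBl a b c : mul (a - b) c = mul a c - mul b c.
Proof. by rewrite mulDl mulNl. Qed.
Lemma mulBr a b c : mul a (b - c) = mul a b - mul a c.
Proof. by rewrite mulDr mulNr. Qed.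

End Alg.

Section Dual.
Context {K : numFieldType} {A : normedModType K}.

Lemma in_dualB (J : set A) f x y : in_dual J f -> J x -> J y ->
  (forall x y, J x -> J y -> J (x + y)) -> (forall (k : K) x, J x -> J (k *: x)) ->
  f (x - y) = f x - f y.
Proof.
case=> fD fZ _ Jx Jy JD JZ.
have Jny : J (- y) by rewrite -scaleN1r; apply: JZ.
by rewrite fD // -scaleN1r fZ // mulN1r.
Qed.

Lemma in_dual_norm (J : set A) f : in_dual J f ->
  exists2 M : K, 0 <= M & forall x, J x -> `|f x| <= M * `|x|.
Proof.
case=> _ _ [M HM]; exists `|M| => // x Jx.
by apply: bound_norm => //; apply: HM.
Qed.

End Dual.

Section Net.
Context {K : numFieldType} {A : normedModType K} (mul : A -> A -> A).
Context (BA : banach_algebra mul).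
Context (L : Type) (le : L -> L -> Prop) (aa : L -> A).
Context (dle : directed le) (bnd : bounded_net aa) (qc : quasi_central mul le aa).

Local Instance PF : ProperFilter (netF le) := netF_proper dle.

Local Notation I := (Iset mul le aa).
Local Notation F := (netF le).

Lemma IP x : I x <-> (fun i => mul x (aa i)) @ F --> x.
Proof. exact: net_limP. Qed.

Lemma bnd0 : exists2 B : K, 0 <= B & forall i, `|aa i| <= B.
Proof.
case: bnd => B HB; case: dle => [[i0] _ _ _].
by exists B => //; apply: le_trans (HB i0).
Qed.

Lemma mul_cvgl (T : Type) (G : set_system T) {GF : Filter G} (z : T -> A) l b :
  z @ G --> l -> (fun t => mul b (z t)) @ G --> mul b l.
Proof.
apply: (squeeze (C := `|b|)) => // t.
by rewrite -(mulBr BA) // (norm_mul BA).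
Qed.

Lemma mul_cvgr (T : Type) (G : set_system T) {GF : Filter G} (z : T -> A) l b :
  z @ G --> l -> (fun t => mul (z t) b) @ G --> mul l b.
Proof.
apply: (squeeze (C := `|b|)) => // t.
by rewrite -(mulBl BA) // mulrC (norm_mul BA).
Qed.

Lemma I_add x y : I x -> I y -> I (x + y).
Proof.
move=> /IP Hx /IP Hy; apply/IP.
have -> : (fun i => mul (x + y) (aa i)) = (fun i => mul x (aa i) + mul y (aa i)).
  by apply/funext => i; rewrite (mulDl BA).
exact: (cvgD Hx Hy).
Qed.

Lemma I_scale (k : K) x : I x -> I (k *: x).
Proof.
move=> /IP Hx; apply/IP.
have -> : (fun i => mul (k *: x) (aa i)) = (fun i => k *: mul x (aa i)).
  by apply/funext => i; rewrite (mulZl BA).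
exact: (cvgZ (cvg_cst k) Hx).
Qed.

Lemma I_sub x y : I x -> I y -> I (x - y).
Proof. by move=> Ix Iy; apply: I_add => //; rewrite -scaleN1r; apply: I_scale. Qed.

Lemma I_mull b x : I x -> I (mul b x).
Proof.
move=> /IP Hx; apply/IP.
have -> : (fun i => mul (mul b x) (aa i)) = (fun i => mul b (mul x (aa i))).
  by apply/funext => i; rewrite (mulA BA).
exact: mul_cvgl.
Qed.

Lemma qcP a : (fun i => mul a (aa i) - mul (aa i) a) @ F --> 0.
Proof. exact/net_limP/qc. Qed.

Lemma I_mulr b x : I x -> I (mul x b).
Proof.
move=> /IP Hx; apply/IP.
have -> : (fun i => mul (mul x b) (aa i)) =
   (fun i => mul x (mul b (aa i) - mul (aa i) b) + mul (mul x (aa i)) b).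
  by apply/funext => i /=; rewrite -!(mulA BA) -(mulDr BA) subrK.
rewrite -[X in _ --> X]add0r.
have H1 := mul_cvgl (b:=x) (qcP b); rewrite (bmul0r BA) in H1.
have H2 := mul_cvgr (b:=b) Hx. exact: (cvgD (H1 _) (H2 _)).
Qed.

Lemma I_left x : I x -> (fun i => mul (aa i) x) @ F --> x.
Proof.
move=> /IP Hx.
have -> : (fun i => mul (aa i) x) =
   (fun i => mul x (aa i) - (mul x (aa i) - mul (aa i) x)).
  by apply/funext => i; rewrite opprB addrC subrK.
rewrite -[X in _ --> X]subr0; exact: (cvgB Hx (qcP x)).
Qed.

Lemma dual_cvg (T : Type) (G : set_system T) {GF : Filter G} g (z : T -> A) x :
  in_dual I g -> (forall t, I (z t)) -> I x -> z @ G --> x -> g \o z @ G --> g x.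
Proof.
move=> gd Iz Ix; have [M M0 HM] := in_dual_norm gd.
apply: (squeeze (C := M)) => // t /=.
rewrite -(in_dualB gd) //; [apply: HM; exact: I_sub|exact: I_add|exact: I_scale].
Qed.


Lemma lim_uniq (h : L -> K) (a b : K) : h @ F --> a -> h @ F --> b -> a = b.
Proof. move=> Ha Hb; apply: (@cvg_unique _ _ (h @ F) _ a b) => //; exact: norm_hausdorff. Qed.

Lemma Ilin (g : A -> K) : in_dual I g ->
  [/\ forall x y, I x -> I y -> g (x + y) = g x + g y,
      forall (k : K) x, I x -> g (k *: x) = k * g x
    & forall x y, I x -> I y -> g (x - y) = g x - g y].
Proof.
move=> gd; have [gD gZ _] := gd; split; [exact: gD|exact: gZ|move=> x y Ix Iy].
by apply: (in_dualB (J := I)) => //; [exact: I_add|exact: I_scale].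
Qed.

Section D.
Context (D : A -> A -> K) (dD : derivation mul setT I D).

Lemma Dd a : in_dual I (D a).
Proof. by case: dD => H _ _ _ _; apply: H. Qed.
Lemma D_add a b x : I x -> D (a + b) x = D a x + D b x.
Proof. by case: dD => _ H _ _ _ Ix; apply: H. Qed.
Lemma D_scale (k : K) a x : I x -> D (k *: a) x = k * D a x.
Proof. by case: dD => _ _ H _ _ Ix; apply: H. Qed.
Lemma D_leib a b x : I x -> D (mul a b) x = D b (mul x a) + D a (mul b x).
Proof. by case: dD => _ _ _ _ H Ix; apply: H. Qed.
Lemma D_bnd : exists2 M : K, 0 <= M & forall a x, I x -> `|D a x| <= M * `|a| * `|x|.
Proof.
case: dD => _ _ _ [M HM] _; exists `|M| => // a x Ix.
rewrite -mulrA; apply: bound_norm; rewrite ?mulr_ge0 // mulrA; exact: HM.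
Qed.
Lemma D_sub a b x : I x -> D (a - b) x = D a x - D b x.
Proof. by move=> Ix; rewrite D_add // -scaleN1r D_scale // mulN1r. Qed.

End D.

Lemma case2 (M : set A) : closed_ideal mul M -> codim_one M ->
  H1_trivial mul M I -> H1_trivial mul setT I.
Proof.
move=> [_ M0 MD MZ Mmul] [e eM dec] H1M D dD.
have dDM : derivation mul M I D.
  case: dD => H1 H2 H3 [Mb HMb] H5; split => //.
  - by move=> a _; apply: H1.
  - by move=> a b x _ _; apply: H2.
  - by move=> k a x _; apply: H3.
  - by exists Mb => a x _; apply: HMb.
  - by move=> a b x _ _; apply: H5.
have [f fd Hf] := H1M D dDM.
exists f => //.
have [fD fZ fB] := Ilin fd.
have [DD DZ DB] := Ilin (Dd dD e).
pose phi z := D e z - (f (mul z e) - f (mul e z)).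
have phiM_l m x : M m -> I x -> phi (mul m x) = 0.
  move=> Mm Ix.
  have Lb := D_leib dD e m Ix.
  have Mem : M (mul e m) by case: (Mmul e m Mm).
  have E1 := Hf _ _ Mem Ix.
  have E2 := Hf _ _ Mm (I_mulr e Ix).
  rewrite /phi; have -> : D e (mul m x) = D (mul e m) x - D m (mul x e) by rewrite Lb addrAC subrr add0r.
  rewrite E1 E2 !(mulA BA); ring.
have phiM_r m x : M m -> I x -> phi (mul x m) = 0.
  move=> Mm Ix.
  have Lb := D_leib dD m e Ix.
  have Mme : M (mul m e) by case: (Mmul e m Mm).
  have E1 := Hf _ _ Mme Ix.
  have E2 := Hf _ _ Mm (I_mull e Ix).
  rewrite /phi; have -> : D e (mul x m) = D (mul m e) x - D m (mul e x) by rewrite Lb addrK.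
  rewrite E1 E2 !(mulA BA); ring.
have Ie x : I x -> I (mul x e) by move=> Ix; exact: I_mulr.
have eI x : I x -> I (mul e x) by move=> Ix; exact: I_mull.
have phiD x y : I x -> I y -> phi (x + y) = phi x + phi y.
  move=> Ix Iy; rewrite /phi (mulDl BA) (mulDr BA) DD // !fD //; first ring.
  - exact: eI.
  - exact: eI.
  - exact: Ie.
  - exact: Ie.
have phiZ (k : K) x : I x -> phi (k *: x) = k * phi x.
  move=> Ix; rewrite /phi (mulZl BA) (mulZr BA) DZ // !fZ //; first ring.
  - exact: eI.
  - exact: Ie.
have phid : in_dual I phi.
  split => //.
  have [Md Md0 HMd] := D_bnd dD.
  have [Mf Mf0 HMf] := in_dual_norm fd.
  exists (Md * `|e| + Mf * `|e| + Mf * `|e|) => x Ix.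
  rewrite /phi; apply: (le_trans (ler_normB _ _)).
  rewrite !mulrDl -addrA; apply: lerD; first exact: HMd.
  apply: (le_trans (ler_normB _ _)); apply: lerD.
    apply: (le_trans (HMf _ (Ie _ Ix))); rewrite -mulrA ler_wpM2l //.
    by rewrite mulrC norm_mul.
  apply: (le_trans (HMf _ (eI _ Ix))); rewrite -mulrA ler_wpM2l //.
  exact: norm_mul.
have [c [m0 Mm0 Hee]] := dec (mul e e).
have phi_der x : I x -> phi (mul x e) + phi (mul e x) = c * phi x.
  move=> Ix.
  have Lb := D_leib dD e e Ix.
  rewrite Hee D_add // D_scale // (Hf _ _ Mm0 Ix) in Lb.
  have F1 : f (mul (mul x e) e) = c * f (mul x e) + f (mul x m0).
    rewrite -(mulA BA) Hee (mulDr BA) (mulZr BA) fD ?fZ //; first [exact: Ie|exact: I_mulr|(apply: I_scale; exact: Ie)].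
  have F2 : f (mul e (mul e x)) = c * f (mul e x) + f (mul m0 x).
    rewrite (mulA BA) Hee (mulDl BA) (mulZl BA) fD ?fZ //; first [exact: eI|exact: I_mull|(apply: I_scale; exact: eI)].
  rewrite /phi F1 F2 (mulA BA).
  have -> : D e (mul x e) = c * D e x + (f (mul x m0) - f (mul m0 x)) - D e (mul e x) by rewrite Lb addrK.
  ring.
have Hex : forall i, exists p : K * A, M p.2 /\ aa i = p.1 *: e + p.2.
  by move=> i; have [k [m Mm Hm]] := dec (aa i); exists (k, m).
have [g Hg] := choice Hex.
pose k i := (g i).1.
have L1 y : I y -> (fun i => k i * phi (mul y e)) @ F --> phi y.
  move=> Iy.
  have H := dual_cvg (z := fun i => mul y (aa i)) phid (fun i => I_mulr (aa i) Iy) Iy (proj1 (IP y) Iy).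
  have <- // : phi \o (fun i => mul y (aa i)) = (fun i => k i * phi (mul y e)).
  apply/funext => i /=; have [Mm ->] := Hg i.
  rewrite (mulDr BA) (mulZr BA) phiD ?phiZ ?(phiM_r _ _ Mm Iy) ?addr0 //.
  - exact: Ie.
  - by apply: I_scale; exact: Ie.
  - exact: I_mulr.
  - by apply: H.
have L2 y : I y -> (fun i => k i * phi (mul e y)) @ F --> phi y.
  move=> Iy.
  have H := dual_cvg (z := fun i => mul (aa i) y) phid (fun i => I_mull (aa i) Iy) Iy (I_left Iy).
  have <- // : phi \o (fun i => mul (aa i) y) = (fun i => k i * phi (mul e y)).
  apply/funext => i /=; have [Mm ->] := Hg i.
  rewrite (mulDl BA) (mulZl BA) phiD ?phiZ ?(phiM_l _ _ Mm Iy) ?addr0 //.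
  - exact: eI.
  - by apply: I_scale; exact: eI.
  - exact: I_mull.
  - by apply: H.
have claim x0 : I x0 -> phi (mul x0 e) = 0.
  move=> Ix0; apply: contrapT => /eqP pn0.
  have Hk : (fun i => k i) @ F --> phi x0 / phi (mul x0 e).
    have H := cvgMr_tmp (b := (phi (mul x0 e))^-1) (L1 x0 Ix0).
    have -> : (fun i => k i) = (fun i => k i * phi (mul x0 e) * (phi (mul x0 e))^-1).
      by apply/funext => i; rewrite mulfK.
    by apply: H.
  set kk := phi x0 / phi (mul x0 e) in Hk.
  have Eq1 z : I z -> phi z = kk * phi (mul z e).
    move=> Iz; apply: (lim_uniq (L1 z Iz)); exact: (cvgMr_tmp Hk).
  have Eq2 z : I z -> phi z = kk * phi (mul e z).
    move=> Iz; apply: (lim_uniq (L2 z Iz)); exact: (cvgMr_tmp Hk).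
  have E1 : phi (mul x0 e) = kk * (c * phi (mul x0 e)).
    rewrite {1}(Eq1 _ (Ie _ Ix0)); congr (kk * _).
    rewrite -(mulA BA) Hee (mulDr BA) (mulZr BA) phiD ?phiZ ?(phiM_r _ _ Mm0 Ix0) ?addr0 //.
    - exact: Ie.
    - by apply: I_scale; exact: Ie.
    - exact: I_mulr.
  have E2 := phi_der x0 Ix0.
  have E3 := Eq2 x0 Ix0.
  have E4 := Eq1 x0 Ix0.
  have kc : kk * c = 1.
    by apply: (mulIf pn0); rewrite mul1r -mulrA -E1.
  have pe0 : phi (mul e x0) = 0.
    have : phi (mul x0 e) + phi (mul e x0) = phi (mul x0 e).
      by rewrite E2 E4 mulrA [c * kk]mulrC kc mul1r.
    by move/(congr1 (fun t => t - phi (mul x0 e))); rewrite subrr addrC addKr.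
  have k0 : kk = 0.
    have : kk * phi (mul x0 e) = 0 by rewrite -E4 E3 pe0 mulr0.
    by move/eqP; rewrite mulf_eq0 (negPf pn0) orbF => /eqP.
  by move: kc; rewrite k0 mul0r => /eqP; rewrite eq_sym oner_eq0.
have phi0 y : I y -> phi y = 0.
  move=> Iy; apply: (lim_uniq (L1 y Iy)); rewrite claim //.
  have -> : (fun i => k i * 0) = (fun=> 0) by apply/funext => i; rewrite mulr0.
  exact: cvg_cst.
move=> a x _ Ix; have [ka [ma Mma ->]] := dec a.
rewrite D_add // D_scale // (Hf _ _ Mma Ix).
have := phi0 x Ix; rewrite /phi => /eqP; rewrite subr_eq0 => /eqP ->.
rewrite (mulDr BA) (mulZr BA) (mulDl BA) (mulZl BA) !fD ?fZ //; first ring.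
all: first [exact: Ie | exact: eI | exact: I_mulr | exact: I_mull | (apply: I_scale; first [exact: Ie|exact: eI])].
Qed.

Lemma lim_bound (T : Type) (U : set_system T) {UU : ProperFilter U} (h : T -> K) (l C : K) :
  h @ U --> l -> (forall t, `|h t| <= C) -> `|l| <= C.
Proof.
move=> /cvgrPdist_lt Hl HC; apply/ler_addgt0Pr => e e0.
have [t Ht] := filter_ex (Hl e e0).
apply: (le_trans (_ : _ <= `|l - h t| + `|h t|)).
  by rewrite -{1}(subrK (h t) l) ler_normD.
by rewrite addrC lerD // ltW.
Qed.

Lemma case1 (Hcomp : forall (U : set_system L), UltraFilter U -> forall (h : L -> K) (B : K),
    (forall t, `|h t| <= B) -> exists l : K, h @ U --> l) :
  weakly_amenable mul -> (forall i, I (aa i)) -> H1_trivial mul setT I.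
Proof.
move=> WA Iaa D dD.
have [U [UU FU]] := ultraFilterLemma (netF_proper dle).
have lift (h : L -> K) (l : K) : h @ F --> l -> h @ U --> l.
  by move=> H P /H; apply: FU.
have [Md Md0 HMd] := D_bnd dD.
have [Bn Bn0 HBn] := bnd0.
have Iy y i : I (mul y (aa i)) by apply: I_mull.
have hbnd a y i : `|D a (mul y (aa i))| <= (Md * `|a| * Bn) * `|y|.
  apply: (le_trans (HMd _ _ (Iy y i))).
  rewrite -!mulrA ler_wpM2l // ler_wpM2l // mulrC.
  apply: (le_trans (norm_mul BA _ _)); rewrite ler_wpM2l //.
pose E a y := lim ((fun i => D a (mul y (aa i))) @ U).
have E_cvg a y : (fun i => D a (mul y (aa i))) @ U --> E a y.
  have [l Hl] := Hcomp U UU _ _ (hbnd a y).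
  exact: (cvgP _ Hl).
have uniqU (h : L -> K) (l1 l2 : K) : h @ U --> l1 -> h @ U --> l2 -> l1 = l2.
  move=> H1 H2; apply: (@cvg_unique _ _ (h @ U) _ l1 l2) => //; exact: norm_hausdorff.
have EI a x : I x -> E a x = D a x.
  move=> Ix; apply: (uniqU _ _ _ (E_cvg a x)); apply: lift.
  have := dual_cvg (z := fun i => mul x (aa i)) (Dd dD a) (fun i => I_mulr (aa i) Ix) Ix (proj1 (IP x) Ix).
  by apply.
have [DD DZ DB] := (fun a => Ilin (Dd dD a)) 0.
have Dlin a := Ilin (Dd dD a).
have dE : derivation mul setT setT E.
  split.
  - move=> a _; split.
    + move=> x y _ _; apply: (uniqU _ _ _ (E_cvg a (x + y))).
      have [Da _ _] := Dlin a.
      have -> : (fun i => D a (mul (x + y) (aa i))) =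
                (fun i => D a (mul x (aa i)) + D a (mul y (aa i))).
        by apply/funext => i; rewrite (mulDl BA) Da.
      exact: (cvgD (E_cvg a x) (E_cvg a y)).
    + move=> k x _; apply: (uniqU _ _ _ (E_cvg a (k *: x))).
      have [_ Za _] := Dlin a.
      have -> : (fun i => D a (mul (k *: x) (aa i))) =
                (fun i => k * D a (mul x (aa i))).
        by apply/funext => i; rewrite (mulZl BA) Za.
      exact: (cvgMl_tmp (a := k) (E_cvg a x)).
    + exists (Md * `|a| * Bn) => x _.
      by apply: (lim_bound (E_cvg a x)) => i; apply: hbnd.
  - move=> a b x _ _ _; apply: (uniqU _ _ _ (E_cvg (a + b) x)).
    have -> : (fun i => D (a + b) (mul x (aa i))) =
              (fun i => D a (mul x (aa i)) + D b (mul x (aa i))).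
      by apply/funext => i; rewrite D_add.
    exact: (cvgD (E_cvg a x) (E_cvg b x)).
  - move=> k a x _ _; apply: (uniqU _ _ _ (E_cvg (k *: a) x)).
    have -> : (fun i => D (k *: a) (mul x (aa i))) =
              (fun i => k * D a (mul x (aa i))).
      by apply/funext => i; rewrite D_scale.
    exact: (cvgMl_tmp (a := k) (E_cvg a x)).
  - exists (Md * Bn) => a x _ _.
    apply: (lim_bound (E_cvg a x)) => i.
    by rewrite (mulrAC Md); apply: hbnd.
  - move=> a b y _ _ _; apply: (uniqU _ _ _ (E_cvg (mul a b) y)).
    pose w i := D b (mul (mul y (aa i)) a) - D b (mul (mul y a) (aa i)).
    have w0 : w @ U --> (0 : K).
      apply: lift.
      have Hv : (fun i => mul (aa i) a - mul a (aa i)) @ F --> (0 : A).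
        rewrite -oppr0; have -> : (fun i => mul (aa i) a - mul a (aa i)) =
          (fun i => - (mul a (aa i) - mul (aa i) a)) by apply/funext => i; rewrite opprB.
        exact: (cvgN (qcP a)).
      apply: (squeeze (C := Md * `|b| * `|y|) _ _ Hv); first by rewrite !mulr_ge0.
      move=> i; rewrite subr0 /w.
      have Iv : I (mul y (mul (aa i) a - mul a (aa i))).
        by apply: I_mull; apply: I_sub; [apply: I_mulr|apply: I_mull].
      have -> : D b (mul (mul y (aa i)) a) - D b (mul (mul y a) (aa i)) =
                D b (mul y (mul (aa i) a - mul a (aa i))).
        have [_ _ Bb] := Dlin b.
        by rewrite (mulBr BA) Bb ?(mulA BA) //; apply: I_mulr; apply: Iy.
      apply: (le_trans (HMd _ _ Iv)); rewrite -!mulrA ler_wpM2l // ler_wpM2l //.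
      by rewrite subr0; apply: norm_mul.
    have -> : (fun i => D (mul a b) (mul y (aa i))) =
      (fun i => D b (mul (mul y a) (aa i)) + w i + D a (mul (mul b y) (aa i))).
      apply/funext => i; rewrite D_leib // /w addrCA subrr addr0 (mulA BA) //.
    have H : (fun i => D b (mul (mul y a) (aa i)) + w i + D a (mul (mul b y) (aa i))) @ U
       --> E b (mul y a) + 0 + E a (mul b y).
      exact: (cvgD (cvgD (E_cvg b (mul y a)) w0) (E_cvg a (mul b y))).
    by rewrite addr0 in H.
have [g gd Hg] := WA E dE.
exists g.
  by have [gD gZ [Mg HMg]] := gd; split; [move=> x y _ _; apply: gD|move=> k x _; apply: gZ|exists Mg => x _; apply: HMg].
by move=> a x _ Ix; rewrite -EI // Hg.
Qed.
End Net.

Section C.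
Local Open Scope complex_scope.
Context (R : realType).
Local Notation Rz := (@complex.Re R).
Local Notation Iz := (@complex.Im R).
Definition Cn : numFieldType := R[i].

Lemma normC_le (z : R[i]) : `|z| <= (`|Rz z| + `|Iz z|)%:C.
Proof.
rewrite normc_def lecR -[X in _ <= X]ger0_norm ?addr_ge0 // -sqrtr_sqr.
rewrite ler_sqrt ?sqr_ge0 // sqrrD !real_normK ?num_real //.
by rewrite addrAC lerDl mulrn_wge0 // mulr_ge0.
Qed.

Lemma Re_le (z : R[i]) : (`|Rz z|)%:C <= `|z|.
Proof.
rewrite normc_def lecR -sqrtr_sqr ler_sqrt ?addr_ge0 ?sqr_ge0 //.
by rewrite lerDl sqr_ge0.
Qed.

Lemma Im_le (z : R[i]) : (`|Iz z|)%:C <= `|z|.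
Proof.
rewrite normc_def lecR -sqrtr_sqr ler_sqrt ?addr_ge0 ?sqr_ge0 //.
by rewrite lerDr sqr_ge0.
Qed.


Lemma ultra_compact (T : Type) (X : topologicalType) (S : set X) (U : set_system T)
  (UU : UltraFilter U) : compact S -> forall h : T -> X, (forall t, S (h t)) ->
  exists l : X, h @ U --> l.
Proof.
move=> cS h hS.
have US : (h @ U) S by apply: (@filterS _ U _ setT); [move=> t _; exact: hS|exact: filterT].
have [l [_ cl]] := cS (h @ U) _ US.
exists l => V nV.
have [//|HC] := in_ultra_setVsetC (h @^-1` V) UU.
have [x [nVx Vx]] := cl (~` V) V HC nV.
by exfalso; apply: nVx.
Qed.

Lemma ultra_C (T : Type) (U : set_system T) (UU : UltraFilter U) (h : T -> Cn) (B : Cn) :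
  (forall t, `|h t| <= B) -> exists l : Cn, h @ U --> l.
Proof.
move=> HB.
have bR t : `|Rz (h t)| <= Rz B.
  by have := le_trans (Re_le (h t)) (HB t); rewrite lecE => /andP[_].
have bI t : `|Iz (h t)| <= Rz B.
  by have := le_trans (Im_le (h t)) (HB t); rewrite lecE => /andP[_].
have Sr t : `[- Rz B, Rz B]%classic (Rz (h t)) by rewrite /= in_itv /= -ler_norml.
have Si t : `[- Rz B, Rz B]%classic (Iz (h t)) by rewrite /= in_itv /= -ler_norml.
have [lr Hr] := ultra_compact UU (@segment_compact R (- Rz B) (Rz B)) Sr.
have [li Hi] := ultra_compact UU (@segment_compact R (- Rz B) (Rz B)) Si.
exists (lr +i* li).
apply/cvgrPdist_lt => e e0.
have : (0 < e) by [].
rewrite ltcE => /andP[/eqP He Re0]; rewrite /= in He Re0.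
have -> : e = (Rz e)%:C by case: e He {e0 Re0} => a b /= ->.
have e2 : 0 < Rz e / 2 by rewrite divr_gt0.
have Hr' := (cvgrPdist_lt _ _).1 Hr _ e2.
have Hi' := (cvgrPdist_lt _ _).1 Hi _ e2.
near=> t.
have H1 : `|lr - Rz (h t)| < Rz e / 2 by near: t; exact: Hr'.
have H2 : `|li - Iz (h t)| < Rz e / 2 by near: t; exact: Hi'.
move: H1 H2; case: (h t) => x y /= H1 H2.
apply: (le_lt_trans (normC_le _)); rewrite ltcR /=.
by rewrite [Rz e]splitr ltrD.
Unshelve. all: by end_near.
Qed.
End C.

Unset Implicit Arguments.
Theorem theorem3p7 (R : realType) (A : completeNormedModType R[i])
  (mul : A -> A -> A) (L : Type) (le : L -> L -> Prop) (aa : L -> A) :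
  banach_algebra mul ->
  directed le ->
  bounded_net aa ->
  quasi_central mul le aa ->
  ((weakly_amenable mul /\ (forall i, Iset mul le aa (aa i)))
   \/ (exists M : set A, [/\ closed_ideal mul M, codim_one M
                           & H1_trivial mul M (Iset mul le aa)])) ->
  H1_trivial mul setT (Iset mul le aa).
Proof.
move=> BA dle bnd qc [[WA Iaa]|[M [cM c1 H1]]].
- apply: (case1 BA dle bnd qc _ WA Iaa).
  move=> U UU h B HB; exact: (@ultra_C R L U UU h B HB).
- exact: (case2 BA dle qc cM c1 H1).
Qed.
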